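(* Assume (A1), (A2), (A4) for problem (DC), and assume (instead of (A3)) only that each $\nabla f_i$ is Lipschitz continuous on $\mathcal X$ with constant $L_{\nabla f_i}$. Let $\boldsymbol\tau>\mathbf 0$ with $\tau^{\min}:=\min_i\tau_i>2\sum_{i=1}^IL_{\nabla f_i}$, and let $\gamma^\nu=1$ for all $\nu$. Let $\{\mathbf x^\nu\}$ be generated by Algorithm 1 (so $\mathbf x^{\nu+1}=\hat{\mathbf x}(\mathbf x^\nu)$) from some $\mathbf x^0\in\Xi$. Then either $\mathbf x^\nu$ is a stationary point of (DC) for some finite $\nu$, or $\{\mathbf x^\nu\}$ has at least one limit point and every limit point is a stationary point of (DC).
   Context: Let $I\ge1$, $n_1,\dots,n_I\ge1$, $n=\sum_i n_i$. Vectors $\mathbf x\in\mathbb R^n$ are partitioned as $\mathbf x=(\mathbf x_i)_{i=1}^I$, $\mathbf x_i\in\mathbb R^{n_i}$; $\mathbf x_{-i}=(\mathbf x_j)_{j\ne i}$, and $(\mathbf x_i,\mathbf y_{-i})$ is the vector with $i$-th block $\mathbf x_i$ and $j$-th block $\mathbf y_j$ for $j\neq i$. Given sets $\mathcal X_i\subseteq\mathbb R^{n_i}$, functions $f_i,g_i:\mathbb R^n\to\mathbb R$ and $\mathbf h=(h_1,\dots,h_{n_c}):\mathbb R^n\to\mathbb R^{n_c}$, problem (DC) is: minimize $\theta(\mathbf x)=\sum_{i=1}^I(f_i(\mathbf x)-g_i(\mathbf x))$ subject to $\mathbf x_i\in\mathcal X_i$ for all $i$ and $\mathbf h(\mathbf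 x)\le\mathbf 0$. Let $\mathcal X=\prod_i\mathcal X_i$, $\mathcal X_{-i}=\prod_{j\ne i}\mathcal X_j$, $\Xi=\{\mathbf x\in\mathcal X:\mathbf h(\mathbf x)\le\mathbf 0\}$. Assumptions: (A1) each $f_i,g_i,h_j$ is convex and continuously differentiable on an open set containing $\mathcal X$; (A2) each $\mathcal X_i$ is nonempty, closed, convex; (A4) for some $\mathbf x^0\in\Xi$ the set $\{\mathbf x\in\Xi:\theta(\mathbf x)\le\theta(\mathbf x^0)\}$ is compact. A stationary point of (DC) is $\mathbf x^\star\in\Xi$ with $\nabla\theta(\mathbf x^\star)^T(\mathbf y-\mathbf x^\star)\ge0$ for all $\mathbf y\in\Xi$. For $\mathbf y\in\mathcal X$ and $\boldsymbol\tau=(\tau_i)>\mathbf 0$ let $\tilde\theta(\mathbf x;\mathbf y)=\sum_i\tilde\theta_i(\mathbf x_i;\mathbf y)$ with $\tilde\theta_i(\mathbf x_i;\mathbf y)=f_i(\mathbf x_i,\mathbf y_{-i})+\sum_{j\ne i}\nabla_{\mathbf x_i}f_j(\mathbf y)^T(\mathbf x_i-\mathbf y_i)-g_i(\mathbf y)-\sum_{j=1}^I\nabla_{\mathbf x_i}g_j(\mathbf y)^T(\mathbf x_i-\mathbf y_i)+\tfrac{\tau_i}{2}\|\mathbf x_i-\mathbf y_i\|^2,$ and $\hat{\mathbf x}(\mathbf y):=\arg\min_{\mathbf x\in\Xi}\tilde\theta(\mathbf x;\mathbf y)$ (unique, since $\tilde\theta(\cdot;\mathbf y)$ is strongly convex).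 Algorithm 1: given $\boldsymbol\tau$, $\{\gamma^\nu\}\subset(0,1]$ and $\mathbf x^0\in\Xi$, set $\mathbf x^{\nu+1}=\mathbf x^\nu+\gamma^\nu(\hat{\mathbf x}(\mathbf x^\nu)-\mathbf x^\nu)$. *)

(* Defs.v *)
From Stdlib Require Import Reals Lra.
Open Scope R_scope.

(* Vectors of R^n, n = sum_{i<I} ns i, are represented block-wise as
   x : nat -> nat -> R, where x i k is coordinate k of block i.
   Only the coordinates with i < I and k < ns i are meaningful; a vector of
   R^n is such a function which is zero elsewhere ([wf]).
   A block vector of R^{n_i} is u : nat -> R, zero for k >= ns i ([bwf]). *)
Definition Vec := nat -> nat -> R.
Definition BVec := nat -> R.

Fixpoint sumR (n : nat) (F : nat -> R) : R :=
  match n with O => 0 | S m => sumR m F + F m end.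

Definition vadd (x y : Vec) : Vec := fun i k => x i k + y i k.
Definition vsub (x y : Vec) : Vec := fun i k => x i k - y i k.
Definition vscal (t : R) (x : Vec) : Vec := fun i k => t * x i k.
Definition bsub (u v : BVec) : BVec := fun k => u k - v k.
Definition badd (u v : BVec) : BVec := fun k => u k + v k.
Definition bscal (t : R) (u : BVec) : BVec := fun k => t * u k.

Definition binner (ns : nat -> nat) (i : nat) (u v : BVec) : R :=
  sumR (ns i) (fun k => u k * v k).
Definition bnorm (ns : nat -> nat) (i : nat) (u : BVec) : R :=
  sqrt (binner ns i u u).
Definition inner (I : nat) (ns : nat -> nat) (x y : Vec) : R :=
  sumR I (fun i => binner ns i (x i) (y i)).
Definition vnorm (I : nat) (ns : nat -> nat) (x : Vec) : R :=
  sqrt (inner I ns x x).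

Definition wf (I : nat) (ns : nat -> nat) (x : Vec) : Prop :=
  forall i k, ~ ((i < I)%nat /\ (k < ns i)%nat) -> x i k = 0.
Definition bwf (ns : nat -> nat) (i : nat) (u : BVec) : Prop :=
  forall k, (ns i <= k)%nat -> u k = 0.

Definition repl (xi : BVec) (y : Vec) (i : nat) : Vec :=
  fun j k => if Nat.eqb j i then xi k else y j k.

Definition vopen_set (I : nat) (ns : nat -> nat) (U : Vec -> Prop) : Prop :=
  forall x, U x -> wf I ns x /\
    exists r, 0 < r /\ forall y, wf I ns y -> vnorm I ns (vsub y x) < r -> U y.

Definition vconvex_set (I : nat) (ns : nat -> nat) (U : Vec -> Prop) : Prop :=
  forall x y t, U x -> U y -> 0 <= t <= 1 ->
    U (vadd (vscal t x) (vscal (1 - t) y)).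

Definition convex_fun_on (U : Vec -> Prop) (f : Vec -> R) : Prop :=
  forall x y t, U x -> U y -> 0 <= t <= 1 ->
    f (vadd (vscal t x) (vscal (1 - t) y)) <= t * f x + (1 - t) * f y.

Definition has_grad_on (I : nat) (ns : nat -> nat) (U : Vec -> Prop)
  (f : Vec -> R) (gf : Vec -> Vec) : Prop :=
  forall x, U x -> wf I ns (gf x) /\
    forall eps, 0 < eps -> exists delta, 0 < delta /\
      forall y, wf I ns y -> vnorm I ns (vsub y x) < delta ->
        Rabs (f y - f x - inner I ns (gf x) (vsub y x)) <= eps * vnorm I ns (vsub y x).

Definition cont_on (I : nat) (ns : nat -> nat) (U : Vec -> Prop) (G : Vec -> Vec) : Prop :=
  forall x, U x -> forall eps, 0 < eps -> exists delta, 0 < delta /\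
    forall y, U y -> vnorm I ns (vsub y x) < delta ->
      vnorm I ns (vsub (G y) (G x)) < eps.

Definition convex_C1_on (I : nat) (ns : nat -> nat) (U : Vec -> Prop)
  (f : Vec -> R) (gf : Vec -> Vec) : Prop :=
  convex_fun_on U f /\ has_grad_on I ns U f gf /\ cont_on I ns U gf.

Definition bsubset (ns : nat -> nat) (i : nat) (S : BVec -> Prop) : Prop :=
  forall u, S u -> bwf ns i u.
Definition bnonempty (S : BVec -> Prop) : Prop := exists u, S u.
Definition bclosed (ns : nat -> nat) (i : nat) (S : BVec -> Prop) : Prop :=
  forall (u : nat -> BVec) (v : BVec), (forall m, S (u m)) -> bwf ns i v ->
    (forall eps, 0 < eps -> exists N, forall m, (N <= m)%nat ->
        bnorm ns i (bsub (u m) v) < eps) -> S v.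
Definition bconvex (S : BVec -> Prop) : Prop :=
  forall u v t, S u -> S v -> 0 <= t <= 1 -> S (badd (bscal t u) (bscal (1 - t) v)).

Definition inX (I : nat) (ns : nat -> nat) (X : nat -> BVec -> Prop) (x : Vec) : Prop :=
  wf I ns x /\ forall i, (i < I)%nat -> X i (x i).
Definition inXi (I : nat) (ns : nat -> nat) (X : nat -> BVec -> Prop)
  (nc : nat) (h : nat -> Vec -> R) (x : Vec) : Prop :=
  inX I ns X x /\ forall j, (j < nc)%nat -> h j x <= 0.

Definition theta (I : nat) (f g : nat -> Vec -> R) (x : Vec) : R :=
  sumR I (fun i => f i x - g i x).
Definition grad_theta (I : nat) (gf gg : nat -> Vec -> Vec) (x : Vec) : Vec :=
  fun i k => sumR I (fun j => gf j x i k - gg j x i k).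

Definition stationary (I : nat) (ns : nat -> nat) (X : nat -> BVec -> Prop)
  (nc : nat) (h : nat -> Vec -> R) (gf gg : nat -> Vec -> Vec) (x : Vec) : Prop :=
  inXi I ns X nc h x /\
  forall y, inXi I ns X nc h y -> 0 <= inner I ns (grad_theta I gf gg x) (vsub y x).

Definition vcompact_set (I : nat) (ns : nat -> nat) (K : Vec -> Prop) : Prop :=
  (forall x, K x -> wf I ns x) /\
  forall u : nat -> Vec, (forall m, K (u m)) ->
    exists xbar (phi : nat -> nat), K xbar /\ (forall m, (phi m < phi (S m))%nat) /\
      forall eps, 0 < eps -> exists N, forall m, (N <= m)%nat ->
        vnorm I ns (vsub (u (phi m)) xbar) < eps.

Definition tilde_theta_i (I : nat) (ns : nat -> nat) (f g : nat -> Vec -> R)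
  (gf gg : nat -> Vec -> Vec) (tau : nat -> R) (i : nat) (xi : BVec) (y : Vec) : R :=
  f i (repl xi y i)
  + sumR I (fun j => if Nat.eqb j i then 0 else binner ns i (gf j y i) (bsub xi (y i)))
  - g i y
  - sumR I (fun j => binner ns i (gg j y i) (bsub xi (y i)))
  + tau i / 2 * (bnorm ns i (bsub xi (y i))) ^ 2.

Definition tilde_theta (I : nat) (ns : nat -> nat) (f g : nat -> Vec -> R)
  (gf gg : nat -> Vec -> Vec) (tau : nat -> R) (x y : Vec) : R :=
  sumR I (fun i => tilde_theta_i I ns f g gf gg tau i (x i) y).

Definition limit_point (I : nat) (ns : nat -> nat) (xs : nat -> Vec) (xbar : Vec) : Prop :=
  wf I ns xbar /\
  forall eps, 0 < eps -> forall N, exists m, (N <= m)%nat /\ vnorm I ns (vsub (xs m) xbar) < eps.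

(* Main.v *)
Require Import Defs.
From Stdlib Require Import Reals Lra Psatz Lia FunctionalExtensionality IndefiniteDescription.
Open Scope R_scope.

Lemma sumR_ext n F G : (forall i, (i<n)%nat -> F i = G i) -> sumR n F = sumR n G.
Proof. induction n; simpl; intros H; auto. rewrite IHn by (intros; apply H; lia). rewrite H by lia. reflexivity. Qed.
Lemma sumR_add n F G : sumR n (fun i => F i + G i) = sumR n F + sumR n G.
Proof. induction n; simpl; [lra|rewrite IHn; lra]. Qed.
Lemma sumR_sub n F G : sumR n (fun i => F i - G i) = sumR n F - sumR n G.
Proof. induction n; simpl; [lra|rewrite IHn; lra]. Qed.
Lemma sumR_scal n c F : sumR n (fun i => c * F i) = c * sumR n F.
Proof. induction n; simpl; [lra|rewrite IHn; lra]. Qed.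
Lemma sumR_zero n F : (forall i, (i<n)%nat -> F i = 0) -> sumR n F = 0.
Proof. induction n; simpl; intros H; auto. rewrite IHn by (intros; apply H; lia). rewrite H by lia. lra. Qed.
Lemma sumR_le n F G : (forall i, (i<n)%nat -> F i <= G i) -> sumR n F <= sumR n G.
Proof. induction n; simpl; intros H; [lra|]. assert (F n <= G n) by (apply H; lia).
 assert (sumR n F <= sumR n G) by (apply IHn; intros; apply H; lia). lra. Qed.
Lemma sumR_nonneg n F : (forall i, (i<n)%nat -> 0 <= F i) -> 0 <= sumR n F.
Proof. intros H. replace 0 with (sumR n (fun _ => 0)) by (apply sumR_zero; auto). apply sumR_le; auto. Qed.
Lemma sumR_term_le n F i : (forall j, (j<n)%nat -> 0 <= F j) -> (i<n)%nat -> F i <= sumR n F.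
Proof. induction n; simpl; intros H Hi; [lia|].
 assert (0 <= sumR n F) by (apply sumR_nonneg; intros; apply H; lia).
 destruct (Nat.eq_dec i n). subst; lra.
 assert (F i <= sumR n F) by (apply IHn; [intros; apply H; lia| lia]).
 assert (0 <= F n) by (apply H; lia). lra. Qed.
Lemma sumR_single n F i : (i<n)%nat -> (forall j, (j<n)%nat -> j<>i -> F j = 0) -> sumR n F = F i.
Proof. induction n; simpl; intros Hi H; [lia|].
 destruct (Nat.eq_dec i n). subst. rewrite sumR_zero. lra. intros; apply H; lia.
 rewrite IHn by (auto; lia). rewrite (H n) by lia. lra. Qed.
Lemma sumR_swap n m F : sumR n (fun i => sumR m (fun j => F i j)) = sumR m (fun j => sumR n (fun i => F i j)).
Proof. induction n; simpl. symmetry; apply sumR_zero; auto.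
 rewrite IHn. rewrite <- sumR_add. reflexivity. Qed.
Lemma sumR_abs n F : Rabs (sumR n F) <= sumR n (fun i => Rabs (F i)).
Proof. induction n; simpl. rewrite Rabs_R0; lra.
 eapply Rle_trans. apply Rabs_triang. lra. Qed.
Lemma sumR_if n F i : (i<n)%nat -> sumR n (fun j => if Nat.eqb j i then 0 else F j) = sumR n F - F i.
Proof. intros Hi.
 assert (E: sumR n (fun j => if Nat.eqb j i then F j else 0) = F i).
 { rewrite (sumR_single n _ i Hi). rewrite Nat.eqb_refl. reflexivity.
   intros j _ Hj. apply Nat.eqb_neq in Hj. rewrite Hj. auto. }
 rewrite <- E, <- sumR_sub. apply sumR_ext. intros j _. destruct (Nat.eqb j i); lra.
Qed.

Lemma unif_delta (n:nat) (P : nat -> R -> Prop) :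
  (forall j, (j<n)%nat -> exists d, 0<d /\ P j d) ->
  (forall j d d', 0<d' <= d -> P j d -> P j d') ->
  exists d, 0<d /\ forall j, (j<n)%nat -> P j d.
Proof. intros H Hm. induction n.
 - exists 1. split. lra. intros; lia.
 - destruct IHn as [d1 [Hd1 H1]]. intros; apply H; lia.
   destruct (H n) as [d2 [Hd2 H2]]. lia.
   exists (Rmin d1 d2). split. apply Rmin_pos; auto.
   intros j Hj. destruct (Nat.eq_dec j n).
   + subst. apply (Hm n d2). split. apply Rmin_pos; auto. apply Rmin_r. auto.
   + apply (Hm j d1). split. apply Rmin_pos; auto. apply Rmin_l. apply H1; lia.
Qed.

Definition PS (I:nat) (ns:nat->nat) (x:Vec) : R := sumR I (fun i => sumR (ns i) (fun k => x i k)).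
Lemma inner_PS I ns x y : inner I ns x y = PS I ns (fun i k => x i k * y i k).
Proof. reflexivity. Qed.
Lemma PS_ext I ns x y : (forall i k, (i<I)%nat -> (k< ns i)%nat -> x i k = y i k) -> PS I ns x = PS I ns y.
Proof. intros H. apply sumR_ext. intros. apply sumR_ext. intros; auto. Qed.
Lemma PS_le I ns x y : (forall i k, (i<I)%nat -> (k< ns i)%nat -> x i k <= y i k) -> PS I ns x <= PS I ns y.
Proof. intros H. apply sumR_le. intros. apply sumR_le. intros; auto. Qed.
Lemma PS_add I ns x y : PS I ns (fun i k => x i k + y i k) = PS I ns x + PS I ns y.
Proof. unfold PS. rewrite <- sumR_add. apply sumR_ext. intros. apply sumR_add. Qed.
Lemma PS_scal I ns c x : PS I ns (fun i k => c * x i k) = c * PS I ns x.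
Proof. unfold PS. rewrite <- sumR_scal. apply sumR_ext. intros. apply sumR_scal. Qed.
Lemma inner_nonneg I ns x : 0 <= inner I ns x x.
Proof. apply sumR_nonneg; intros; apply sumR_nonneg; intros. apply Rle_0_sqr. Qed.
Lemma vnorm_nonneg I ns x : 0 <= vnorm I ns x.
Proof. apply sqrt_pos. Qed.
Lemma vnorm_sq I ns x : vnorm I ns x * vnorm I ns x = inner I ns x x.
Proof. unfold vnorm. apply sqrt_sqrt, inner_nonneg. Qed.
Lemma inner_ext I ns x y x' y' : (forall i k, (i<I)%nat -> (k<ns i)%nat -> x i k * y i k = x' i k * y' i k) ->
  inner I ns x y = inner I ns x' y'.
Proof. intros H. rewrite !inner_PS. apply PS_ext; auto. Qed.
Lemma inner_comm I ns x y : inner I ns x y = inner I ns y x.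
Proof. apply inner_ext; intros; ring. Qed.
Lemma vnorm_ext I ns x y : (forall i k, (i<I)%nat -> (k<ns i)%nat -> x i k = y i k) -> vnorm I ns x = vnorm I ns y.
Proof. intros H. unfold vnorm. f_equal. apply inner_ext. intros. rewrite H; auto. Qed.
Lemma amgm I ns a b s : 0 < s -> 2 * inner I ns a b <= s * inner I ns a a + / s * inner I ns b b.
Proof. intros Hs. rewrite !inner_PS, <- !PS_scal, <- PS_add. apply PS_le. intros.
 assert (Hi: s * / s = 1) by (field; lra). assert (0 < /s) by (apply Rinv_0_lt_compat; lra).
 assert (Hq: 0 <= /s * ((s * a i k - b i k) * (s * a i k - b i k))) by (apply Rmult_le_pos; [lra|apply Rle_0_sqr]).
 replace (/ s * ((s * a i k - b i k) * (s * a i k - b i k))) with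
   (s * (a i k * a i k) - 2 * (a i k * b i k) + /s * (b i k * b i k)) in Hq by (field; lra).
 lra. Qed.
Lemma small_le0 a b : 0 <= b -> (forall s, 0 < s -> a <= / s * b) -> a <= 0.
Proof. intros Hb H. destruct (Rle_dec a 0); auto. exfalso.
 assert (Ha: 0 < a) by lra. specialize (H ((b+1)/a)).
 assert (0 < (b+1)/a) by (apply Rdiv_lt_0_compat; lra).
 specialize (H H0). replace (/ ((b+1)/a)) with (a/(b+1)) in H by (field; lra).
 assert (a / (b+1) * b < a). { unfold Rdiv. 
   assert (/(b+1) * (b+1) = 1) by (field; lra). assert (0 < /(b+1)) by (apply Rinv_0_lt_compat; lra). nra. }
 lra. Qed.
Lemma CS I ns a b : inner I ns a b <= vnorm I ns a * vnorm I ns b.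
Proof. pose proof (vnorm_sq I ns a). pose proof (vnorm_sq I ns b).
 pose proof (vnorm_nonneg I ns a). pose proof (vnorm_nonneg I ns b).
 set (na := vnorm I ns a) in *. set (nb := vnorm I ns b) in *.
 destruct (Req_dec na 0) as [Ha|Ha].
 - rewrite Ha. rewrite Rmult_0_l. cut (2 * inner I ns a b <= 0). lra.
   apply small_le0 with (inner I ns b b). apply inner_nonneg. intros s Hs.
   pose proof (amgm I ns a b s Hs). rewrite <- H, Ha in H3. lra.
 - destruct (Req_dec nb 0) as [Hb|Hb].
   + rewrite Hb. rewrite Rmult_0_r. cut (2 * inner I ns a b <= 0). lra.
     apply small_le0 with (inner I ns a a). apply inner_nonneg. intros s Hs.
     pose proof (amgm I ns b a s Hs). rewrite <- H0, Hb, inner_comm in H3. lra.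
   + assert (0 < na) by lra. assert (0 < nb) by lra.
     pose proof (amgm I ns a b (nb/na) (Rdiv_lt_0_compat _ _ H4 H3)).
     rewrite <- H, <- H0 in H5. replace (nb / na * (na * na) + / (nb / na) * (nb * nb)) with (2*(na*nb)) in H5 by (field; lra).
     lra. Qed.
Lemma CS_abs I ns a b : Rabs (inner I ns a b) <= vnorm I ns a * vnorm I ns b.
Proof. apply Rabs_le. split; [|apply CS].
 pose proof (CS I ns (fun i k => - a i k) b).
 replace (inner I ns (fun i k => - a i k) b) with (- inner I ns a b) in H.
 replace (vnorm I ns (fun i k => - a i k)) with (vnorm I ns a) in H. lra.
 unfold vnorm. f_equal. apply inner_ext; intros; ring.
 rewrite !inner_PS. rewrite <- (Rmult_1_l (PS _ _ _)). rewrite Ropp_mult_distr_l, <- PS_scal. apply PS_ext; intros; ring.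
Qed.
Lemma inner_scal_r I ns a t v : inner I ns a (vscal t v) = t * inner I ns a v.
Proof. rewrite !inner_PS, <- PS_scal. apply PS_ext. intros; unfold vscal; ring. Qed.
Lemma inner_sub_r I ns a b c : inner I ns a (vsub b c) = inner I ns a b - inner I ns a c.
Proof. rewrite !inner_PS. unfold Rminus. rewrite <- (Rmult_1_l (PS I ns (fun i k => a i k * c i k))).
 rewrite Ropp_mult_distr_l, <- PS_scal, <- PS_add. apply PS_ext. intros; unfold vsub; ring. Qed.
Lemma inner_sub_l I ns a b c : inner I ns (vsub a b) c = inner I ns a c - inner I ns b c.
Proof. rewrite (inner_comm _ _ (vsub a b)), inner_sub_r, !(inner_comm _ _ c). reflexivity. Qed.
Lemma vnorm_scal I ns t v : 0 <= t -> vnorm I ns (vscal t v) = t * vnorm I ns v.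
Proof. intros Ht. unfold vnorm. replace (inner I ns (vscal t v) (vscal t v)) with ((t*t) * inner I ns v v).
 rewrite sqrt_mult_alt. rewrite sqrt_square; auto. nra.
 rewrite !inner_PS, <- PS_scal. apply PS_ext; intros; unfold vscal; ring. Qed.
Lemma inner_sq_expand I ns p q : inner I ns (vsub p q) (vsub p q) = inner I ns p p - 2 * inner I ns p q + inner I ns q q.
Proof. rewrite !inner_PS. unfold Rminus. rewrite <- (Rmult_1_l (PS I ns (fun i k => p i k * q i k))).
 rewrite <- Rmult_assoc, Ropp_mult_distr_l, <- PS_scal, <- !PS_add. apply PS_ext; intros; unfold vsub; ring. Qed.
Lemma triangle I ns x y z : vnorm I ns (vsub x z) <= vnorm I ns (vsub x y) + vnorm I ns (vsub y z).
Proof. set (p := vsub x y). set (q := vsub y z).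
 assert (E: inner I ns (vsub x z) (vsub x z) = inner I ns p p + 2 * inner I ns p q + inner I ns q q).
 { rewrite !inner_PS. rewrite <- PS_scal, <- !PS_add. apply PS_ext; intros; unfold p, q, vsub; ring. }
 pose proof (CS I ns p q). pose proof (vnorm_sq I ns p). pose proof (vnorm_sq I ns q).
 pose proof (vnorm_nonneg I ns p). pose proof (vnorm_nonneg I ns q).
 pose proof (vnorm_sq I ns (vsub x z)). pose proof (vnorm_nonneg I ns (vsub x z)).
 nra. Qed.
Lemma vnorm_lt_sq I ns v e : vnorm I ns v < e -> inner I ns v v < e * e.
Proof. intros H. rewrite <- vnorm_sq. pose proof (vnorm_nonneg I ns v). nra. Qed.
Lemma sq_lt_vnorm I ns v e : 0 < e -> inner I ns v v < e * e -> vnorm I ns v < e.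
Proof. intros He H. rewrite <- vnorm_sq in H. pose proof (vnorm_nonneg I ns v). nra. Qed.
Lemma inner_zero_coord I ns v : inner I ns v v = 0 -> forall i k, (i<I)%nat -> (k<ns i)%nat -> v i k = 0.
Proof. intros H i k Hi Hk.
 assert (binner ns i (v i) (v i) <= 0).
 { rewrite <- H. apply (sumR_term_le I (fun i => binner ns i (v i) (v i))); auto.
   intros; apply sumR_nonneg; intros; apply Rle_0_sqr. }
 assert (v i k * v i k <= binner ns i (v i) (v i)).
 { apply (sumR_term_le (ns i) (fun k => v i k * v i k)); auto. intros; apply Rle_0_sqr. }
 nra. Qed.
Lemma Rabs_le_inv a b : Rabs a <= b -> - b <= a <= b.
Proof. unfold Rabs. destruct (Rcase_abs a); intros; lra. Qed.
Lemma le_eps_le a b n : 0 <= n -> (forall eps, 0 < eps -> a <= b + eps * n) -> a <= b.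
Proof. intros Hn H. destruct (Rle_dec a b); auto. exfalso.
 assert (He: 0 < (a - b)/(2*(n+1))) by (apply Rdiv_lt_0_compat; lra).
 specialize (H _ He). assert ((a - b) / (2 * (n + 1)) * n < a - b).
 { unfold Rdiv. assert (/(2*(n+1)) * (2*(n+1)) = 1) by (field; lra).
   assert (0 < /(2*(n+1))) by (apply Rinv_0_lt_compat; lra). nra. }
 lra. Qed.

Lemma grad_ineq I ns U f gf x y : vconvex_set I ns U -> convex_fun_on U f -> has_grad_on I ns U f gf ->
  U x -> U y -> wf I ns x -> wf I ns y -> f x + inner I ns (gf x) (vsub y x) <= f y.
Proof. intros HU Hc Hg Ux Uy Wx Wy.
 set (D := inner I ns (gf x) (vsub y x)). set (nd := vnorm I ns (vsub y x)).
 assert (Hnd: 0 <= nd) by apply vnorm_nonneg.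
 cut (D <= f y - f x). lra. apply (le_eps_le _ _ nd Hnd). intros eps Heps.
 destruct (proj2 (Hg x Ux) eps Heps) as [delta [Hd Hy]].
 set (t := Rmin 1 (delta/(2*(nd+1)))).
 assert (Ht0: 0 < t) by (apply Rmin_pos; [lra| apply Rdiv_lt_0_compat; lra]).
 assert (Ht1: t <= 1) by apply Rmin_l.
 assert (Ht2: t <= delta/(2*(nd+1))) by apply Rmin_r.
 set (p := vadd (vscal t y) (vscal (1-t) x)).
 assert (Up: U p) by (apply HU; auto; lra).
 assert (Wp: wf I ns p). { intros i k Hik. unfold p, vadd, vscal. rewrite Wx, Wy by auto. ring. }
 assert (Ep: vsub p x = vscal t (vsub y x)).
 { extensionality i; extensionality k. unfold p, vsub, vadd, vscal. ring. }
 assert (Hlt: vnorm I ns (vsub p x) < delta).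
 { rewrite Ep, vnorm_scal by lra. fold nd.
   assert (t * nd <= delta/(2*(nd+1)) * nd) by (apply Rmult_le_compat_r; auto).
   assert (delta / (2*(nd+1)) * nd < delta).
   { unfold Rdiv. assert (/(2*(nd+1)) * (2*(nd+1)) = 1) by (field; lra).
     assert (0 < /(2*(nd+1))) by (apply Rinv_0_lt_compat; lra). nra. }
   lra. }
 specialize (Hy p Wp Hlt). rewrite Ep, inner_scal_r, vnorm_scal in Hy by lra. fold D nd in Hy.
 assert (Hcv: f p <= t * f y + (1-t) * f x) by (apply Hc; auto; lra).
 apply Rabs_le_inv in Hy.
 assert (t * (D - (f y - f x + eps * nd)) <= 0) by nra.
 assert (D - (f y - f x + eps*nd) <= 0).
 { destruct (Rle_dec (D - (f y - f x + eps*nd)) 0); auto. nra. }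
 lra. Qed.

Lemma lip_upper I ns U f gf Lc x y : vconvex_set I ns U -> convex_fun_on U f -> has_grad_on I ns U f gf ->
  U x -> U y -> wf I ns x -> wf I ns y -> 0 <= Lc ->
  vnorm I ns (vsub (gf y) (gf x)) <= Lc * vnorm I ns (vsub y x) ->
  f y <= f x + inner I ns (gf x) (vsub y x) + Lc * inner I ns (vsub y x) (vsub y x).
Proof. intros HU Hc Hg Ux Uy Wx Wy HL Hlip.
 pose proof (grad_ineq I ns U f gf y x HU Hc Hg Uy Ux Wy Wx).
 assert (E: inner I ns (gf y) (vsub x y) = - inner I ns (gf x) (vsub y x) - inner I ns (vsub (gf y) (gf x)) (vsub y x)).
 { rewrite inner_sub_l.
   replace (inner I ns (gf y) (vsub x y)) with (inner I ns (gf y) (vscal (-1) (vsub y x))).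
   rewrite inner_scal_r. ring. apply inner_ext. intros; unfold vscal, vsub; ring. }
 rewrite E in H.
 pose proof (CS I ns (vsub (gf y) (gf x)) (vsub y x)).
 pose proof (vnorm_sq I ns (vsub y x)). pose proof (vnorm_nonneg I ns (vsub y x)).
 pose proof (vnorm_nonneg I ns (vsub (gf y) (gf x))).
 assert (vnorm I ns (vsub (gf y) (gf x)) * vnorm I ns (vsub y x) <= Lc * vnorm I ns (vsub y x) * vnorm I ns (vsub y x))
  by (apply Rmult_le_compat_r; auto).
 nra. Qed.

Lemma diff_cont I ns U f gf x : has_grad_on I ns U f gf -> U x ->
  exists d, 0 < d /\ forall y, wf I ns y -> vnorm I ns (vsub y x) < d ->
    Rabs (f y - f x) <= (vnorm I ns (gf x) + 1) * vnorm I ns (vsub y x).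
Proof. intros Hg Ux. destruct (proj2 (Hg x Ux) 1 Rlt_0_1) as [d [Hd H]]. exists d. split; auto.
 intros y Wy Hy. specialize (H y Wy Hy). pose proof (CS_abs I ns (gf x) (vsub y x)).
 replace (f y - f x) with ((f y - f x - inner I ns (gf x) (vsub y x)) + inner I ns (gf x) (vsub y x)) by ring.
 eapply Rle_trans. apply Rabs_triang. lra. Qed.
Lemma binner_nonneg ns i u : 0 <= binner ns i u u.
Proof. apply sumR_nonneg; intros; apply Rle_0_sqr. Qed.

Lemma inner_repl I ns a u x i : (i<I)%nat -> inner I ns a (vsub (repl u x i) x) = binner ns i (a i) (bsub u (x i)).
Proof. intros Hi. unfold inner. rewrite (sumR_single I _ i Hi).
 - unfold vsub, repl. rewrite Nat.eqb_refl. reflexivity.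
 - intros j _ Hj. unfold binner. apply sumR_zero. intros. unfold vsub, repl. apply Nat.eqb_neq in Hj; rewrite Hj. ring.
Qed.
Lemma norm_repl I ns u x i : (i<I)%nat ->
  inner I ns (vsub (repl u x i) x) (vsub (repl u x i) x) = binner ns i (bsub u (x i)) (bsub u (x i)).
Proof. intros Hi. rewrite inner_repl by auto. unfold vsub, repl. rewrite Nat.eqb_refl. reflexivity. Qed.
Lemma inX_repl I ns X x i u : inX I ns X x -> (i<I)%nat -> X i u -> bwf ns i u -> inX I ns X (repl u x i).
Proof. intros [Wx Bx] Hi Xu Bu. split.
 - intros j k Hjk. unfold repl. destruct (Nat.eqb_spec j i). subst. apply Bu.
   destruct (Nat.lt_ge_cases k (ns i)); auto. exfalso; apply Hjk; auto. apply Wx; auto.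
 - intros j Hj. unfold repl. destruct (Nat.eqb_spec j i). subst; auto. auto.
Qed.
Lemma binner_grad I ns (gf gg : nat -> Vec -> Vec) x i d :
  binner ns i (grad_theta I gf gg x i) d = sumR I (fun j => binner ns i (gf j x i) d - binner ns i (gg j x i) d).
Proof. unfold binner, grad_theta.
 rewrite (sumR_ext I _ (fun j => sumR (ns i) (fun k => (gf j x i k - gg j x i k) * d k))).
 2:{ intros. rewrite <- sumR_sub. apply sumR_ext. intros; ring. }
 rewrite sumR_swap. apply sumR_ext. intros k _. rewrite Rmult_comm, <- sumR_scal. apply sumR_ext; intros; ring.
Qed.
Lemma inner_grad I ns (gf gg : nat -> Vec -> Vec) x r :
  inner I ns (grad_theta I gf gg x) r = sumR I (fun j => inner I ns (gf j x) r - inner I ns (gg j x) r).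
Proof. unfold inner at 1. rewrite (sumR_ext I _ (fun i => sumR I (fun j => binner ns i (gf j x i) (r i) - binner ns i (gg j x i) (r i)))).
 2:{ intros. apply binner_grad. }
 rewrite sumR_swap. apply sumR_ext. intros j _. apply sumR_sub. Qed.

Lemma tt_self I ns f g gf gg tau x : tilde_theta I ns f g gf gg tau x x = theta I f g x.
Proof. unfold tilde_theta, theta, tilde_theta_i. apply sumR_ext. intros i Hi.
 assert (R: repl (x i) x i = x). { extensionality j; extensionality k. unfold repl. destruct (Nat.eqb_spec j i); subst; auto. }
 assert (Z: forall a, binner ns i a (bsub (x i) (x i)) = 0). { intros. unfold binner. apply sumR_zero. intros; unfold bsub; ring. }
 rewrite R. rewrite (sumR_zero I (fun j => if Nat.eqb j i then 0 else binner ns i (gf j x i) (bsub (x i) (x i)))).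
 2:{ intros j _. destruct (Nat.eqb j i); auto. }
 rewrite (sumR_zero I (fun j => binner ns i (gg j x i) (bsub (x i) (x i)))) by auto.
 unfold bnorm. rewrite Z, sqrt_0. ring. Qed.

Lemma tt_i_eq I ns f g gf gg tau i w x : (i<I)%nat ->
  tilde_theta_i I ns f g gf gg tau i (w i) x =
  f i (repl (w i) x i) - g i x + binner ns i (grad_theta I gf gg x i) (bsub (w i) (x i))
  - binner ns i (gf i x i) (bsub (w i) (x i)) + tau i / 2 * binner ns i (bsub (w i) (x i)) (bsub (w i) (x i)).
Proof. intros Hi. unfold tilde_theta_i. rewrite sumR_if by auto. rewrite binner_grad, sumR_sub.
 unfold bnorm. rewrite pow2_sqrt by apply binner_nonneg. ring. Qed.

Lemma tt_lower I ns f g gf gg tau w x :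
  (forall i, (i<I)%nat -> f i x + inner I ns (gf i x) (vsub (repl (w i) x i) x) <= f i (repl (w i) x i)) ->
  theta I f g x + inner I ns (grad_theta I gf gg x) (vsub w x)
   + sumR I (fun i => tau i / 2 * binner ns i (bsub (w i) (x i)) (bsub (w i) (x i)))
  <= tilde_theta I ns f g gf gg tau w x.
Proof. intros H. unfold theta, inner at 1, tilde_theta. rewrite <- !sumR_add. apply sumR_le. intros i Hi.
 rewrite tt_i_eq by auto. specialize (H i Hi). rewrite inner_repl in H by auto.
 unfold vsub at 1. change (fun k => w i k - x i k) with (bsub (w i) (x i)). lra. Qed.

Lemma tt_upper I ns f g gf gg tau L w x :
  (forall i, (i<I)%nat -> f i (repl (w i) x i) <= f i x + inner I ns (gf i x) (vsub (repl (w i) x i) x)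
     + L i * inner I ns (vsub (repl (w i) x i) x) (vsub (repl (w i) x i) x)) ->
  tilde_theta I ns f g gf gg tau w x <=
  theta I f g x + inner I ns (grad_theta I gf gg x) (vsub w x)
   + sumR I (fun i => (L i + tau i / 2) * binner ns i (bsub (w i) (x i)) (bsub (w i) (x i))).
Proof. intros H. unfold theta, inner at 1, tilde_theta. rewrite <- !sumR_add. apply sumR_le. intros i Hi.
 rewrite tt_i_eq by auto. specialize (H i Hi). rewrite inner_repl, norm_repl in H by auto.
 unfold vsub at 1. change (fun k => w i k - x i k) with (bsub (w i) (x i)). lra. Qed.
Lemma dd_sum I ns w x : inner I ns (vsub w x) (vsub w x) = sumR I (fun i => binner ns i (bsub (w i) (x i)) (bsub (w i) (x i))).
Proof. reflexivity. Qed.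

Lemma step1 I ns X f g gf gg tau L c x xh :
 (forall i, (i<I)%nat -> bsubset ns i (X i)) ->
 (forall i, (i<I)%nat -> forall a b, inX I ns X a -> inX I ns X b -> f i a + inner I ns (gf i a) (vsub b a) <= f i b) ->
 (forall i, (i<I)%nat -> forall a b, inX I ns X a -> inX I ns X b -> g i a + inner I ns (gg i a) (vsub b a) <= g i b) ->
 (forall i, (i<I)%nat -> forall a b, inX I ns X a -> inX I ns X b ->
    f i b <= f i a + inner I ns (gf i a) (vsub b a) + L i * inner I ns (vsub b a) (vsub b a)) ->
 (forall i, (i<I)%nat -> c <= tau i / 2 - sumR I L) ->
 inX I ns X x -> inX I ns X xh ->
 tilde_theta I ns f g gf gg tau xh x <= tilde_theta I ns f g gf gg tau x x ->
 theta I f g xh + c * inner I ns (vsub xh x) (vsub xh x) <= theta I f g x.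
Proof. intros Hsub Hfl Hgl Hfu Hc Hx Hxh Hmin.
 assert (LB := tt_lower I ns f g gf gg tau xh x).
 lapply LB. 2:{ intros i Hi. apply Hfl; auto. apply inX_repl; auto. apply Hxh; auto. apply Hsub; auto. apply Hxh; auto. }
 clear LB; intros LB. rewrite tt_self in Hmin.
 set (d := vsub xh x) in *.
 assert (U: theta I f g xh <= theta I f g x + inner I ns (grad_theta I gf gg x) d + sumR I L * inner I ns d d).
 { unfold theta. rewrite inner_grad. rewrite Rmult_comm, <- sumR_scal, <- !sumR_add. apply sumR_le. intros j Hj.
   pose proof (Hfu j Hj x xh Hx Hxh). pose proof (Hgl j Hj x xh Hx Hxh). fold d in H, H0. lra. }
 assert (T: (c + sumR I L) * inner I ns d d <= sumR I (fun i => tau i / 2 * binner ns i (bsub (xh i) (x i)) (bsub (xh i) (x i)))).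
 { unfold d. rewrite dd_sum, <- sumR_scal. apply sumR_le. intros i Hi. apply Rmult_le_compat_r. apply binner_nonneg.
   specialize (Hc i Hi). lra. }
 lra. Qed.

Lemma step2 I ns X f g gf gg tau L x xh z :
 (forall i, (i<I)%nat -> bsubset ns i (X i)) ->
 (forall i, (i<I)%nat -> forall a b, inX I ns X a -> inX I ns X b -> f i a + inner I ns (gf i a) (vsub b a) <= f i b) ->
 (forall i, (i<I)%nat -> forall a b, inX I ns X a -> inX I ns X b ->
    f i b <= f i a + inner I ns (gf i a) (vsub b a) + L i * inner I ns (vsub b a) (vsub b a)) ->
 (forall i, (i<I)%nat -> 0 <= L i) -> (forall i, (i<I)%nat -> 0 < tau i) ->
 inX I ns X x -> inX I ns X xh -> inX I ns X z ->
 tilde_theta I ns f g gf gg tau xh x <= tilde_theta I ns f g gf gg tau z x ->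
 0 <= inner I ns (grad_theta I gf gg x) (vsub z xh) + sumR I (fun i => L i + tau i / 2) * inner I ns (vsub z x) (vsub z x).
Proof. intros Hsub Hfl Hfu HL Ht Hx Hxh Hz Hmin.
 assert (LB := tt_lower I ns f g gf gg tau xh x).
 lapply LB. 2:{ intros i Hi. apply Hfl; auto. apply inX_repl; auto. apply Hxh; auto. apply Hsub; auto. apply Hxh; auto. }
 clear LB; intros LB.
 assert (UB := tt_upper I ns f g gf gg tau L z x).
 lapply UB. 2:{ intros i Hi. apply Hfu; auto. apply inX_repl; auto. apply Hz; auto. apply Hsub; auto. apply Hz; auto. }
 clear UB; intros UB.
 assert (P: 0 <= sumR I (fun i => tau i / 2 * binner ns i (bsub (xh i) (x i)) (bsub (xh i) (x i)))).
 { apply sumR_nonneg. intros i Hi. apply Rmult_le_pos. specialize (Ht i Hi); lra. apply binner_nonneg. }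
 assert (Q: sumR I (fun i => (L i + tau i / 2) * binner ns i (bsub (z i) (x i)) (bsub (z i) (x i)))
    <= sumR I (fun i => L i + tau i / 2) * inner I ns (vsub z x) (vsub z x)).
 { rewrite Rmult_comm, <- sumR_scal. apply sumR_le. intros i Hi. rewrite (Rmult_comm _ (L i + _)).
   apply Rmult_le_compat_l. specialize (Ht i Hi); specialize (HL i Hi); lra.
   rewrite dd_sum. apply (sumR_term_le I (fun i => binner ns i (bsub (z i) (x i)) (bsub (z i) (x i)))); auto.
   intros; apply binner_nonneg. }
 assert (E: inner I ns (grad_theta I gf gg x) (vsub z xh) = inner I ns (grad_theta I gf gg x) (vsub z x) - inner I ns (grad_theta I gf gg x) (vsub xh x)).
 { rewrite <- inner_sub_r. apply inner_ext. intros; unfold vsub; ring. }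
 lra. Qed.
Lemma vnorm_sym I ns a b : vnorm I ns (vsub a b) = vnorm I ns (vsub b a).
Proof. unfold vnorm. f_equal. apply inner_ext. intros; unfold vsub; ring. Qed.
Lemma sq_le_vnorm I ns v e : 0 <= e -> inner I ns v v <= e * e -> vnorm I ns v <= e.
Proof. intros He H. rewrite <- vnorm_sq in H. pose proof (vnorm_nonneg I ns v). nra. Qed.
Lemma phi_ge (phi : nat -> nat) : (forall m, (phi m < phi (S m))%nat) -> forall m, (m <= phi m)%nat.
Proof. intros H m. induction m. lia. specialize (H m). lia. Qed.
Lemma ge0_of_small q M : 0 <= M -> (forall eta, 0 < eta -> eta <= 1 -> -(eta*M) <= q) -> 0 <= q.
Proof. intros HM H. apply (le_eps_le 0 q M HM). intros eps He.
 destruct (Rle_dec eps 1). specialize (H eps He r). lra.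
 specialize (H 1 Rlt_0_1 (Rle_refl 1)). nra. Qed.
Lemma quad_ge0 A B : 0 <= B -> (forall t, 0 < t -> t <= 1 -> 0 <= t*A + t*t*B) -> 0 <= A.
Proof. intros HB H. apply (le_eps_le 0 A B HB). intros eps He.
 destruct (Rle_dec eps 1).
 - specialize (H eps He r). assert (0 <= eps * (A + eps*B)) by nra.
   destruct (Rle_dec 0 (A + eps*B)); auto. nra.
 - specialize (H 1 Rlt_0_1 (Rle_refl 1)). nra. Qed.
Theorem theorem2
  (I : nat) (ns : nat -> nat) (nc : nat)
  (X : nat -> BVec -> Prop)
  (f g : nat -> Vec -> R) (h : nat -> Vec -> R)
  (gf gg gh : nat -> Vec -> Vec)
  (L tau : nat -> R) (x0 : Vec) (xs : nat -> Vec)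
  (HI : (1 <= I)%nat)
  (Hns : forall i, (i < I)%nat -> (1 <= ns i)%nat)
  (* (A1) *)
  (HA1 : exists U : Vec -> Prop,
      vopen_set I ns U /\ vconvex_set I ns U /\ (forall x, inX I ns X x -> U x) /\
      (forall i, (i < I)%nat -> convex_C1_on I ns U (f i) (gf i)) /\
      (forall i, (i < I)%nat -> convex_C1_on I ns U (g i) (gg i)) /\
      (forall j, (j < nc)%nat -> convex_C1_on I ns U (h j) (gh j)))
  (* (A2) *)
  (HA2 : forall i, (i < I)%nat ->
      bsubset ns i (X i) /\ bnonempty (X i) /\ bclosed ns i (X i) /\ bconvex (X i))
  (* (A4), at the starting point x0 *)
  (Hx0 : inXi I ns X nc h x0)
  (HA4 : vcompact_set I ns (fun x => inXi I ns X nc h x /\ theta I f g x <= theta I f g x0))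
  (* Lipschitz gradients of the f_i on X *)
  (HL : forall i, (i < I)%nat -> 0 <= L i /\
      forall x y, inX I ns X x -> inX I ns X y ->
        vnorm I ns (vsub (gf i x) (gf i y)) <= L i * vnorm I ns (vsub x y))
  (* tau > 0 and tau^min > 2 sum_i L_i *)
  (Htau_pos : forall i, (i < I)%nat -> 0 < tau i)
  (Htau : forall i, (i < I)%nat -> 2 * sumR I L < tau i)
  (* Algorithm 1 with gamma^nu = 1: x^{nu+1} = xhat(x^nu) *)
  (Hxs0 : xs O = x0)
  (Hxs : forall nu, inXi I ns X nc h (xs (S nu)) /\
      forall z, inXi I ns X nc h z ->
        tilde_theta I ns f g gf gg tau (xs (S nu)) (xs nu)
        <= tilde_theta I ns f g gf gg tau z (xs nu)) :
  (exists nu, stationary I ns X nc h gf gg (xs nu)) \/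
  ((exists xbar, limit_point I ns xs xbar) /\
   (forall xbar, limit_point I ns xs xbar -> stationary I ns X nc h gf gg xbar)).
Proof.
 destruct HA1 as [U [HUo [HUc [HXU [Hf [Hg Hh]]]]]].
 assert (Hsub: forall i, (i<I)%nat -> bsubset ns i (X i)) by (intros; apply HA2; auto).
 assert (WX: forall x, inX I ns X x -> wf I ns x) by (intros x [W _]; auto).
 assert (Hfl: forall i, (i<I)%nat -> forall a b, inX I ns X a -> inX I ns X b -> f i a + inner I ns (gf i a) (vsub b a) <= f i b).
 { intros i Hi a b Ha Hb. destruct (Hf i Hi) as [Hc [Hgd _]]. apply (grad_ineq I ns U); auto. }
 assert (Hgl: forall i, (i<I)%nat -> forall a b, inX I ns X a -> inX I ns X b -> g i a + inner I ns (gg i a) (vsub b a) <= g i b).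
 { intros i Hi a b Ha Hb. destruct (Hg i Hi) as [Hc [Hgd _]]. apply (grad_ineq I ns U); auto. }
 assert (HL0: forall i, (i<I)%nat -> 0 <= L i) by (intros; apply HL; auto).
 assert (Hfu: forall i, (i<I)%nat -> forall a b, inX I ns X a -> inX I ns X b ->
    f i b <= f i a + inner I ns (gf i a) (vsub b a) + L i * inner I ns (vsub b a) (vsub b a)).
 { intros i Hi a b Ha Hb. destruct (Hf i Hi) as [Hc [Hgd _]]. apply (lip_upper I ns U); auto. apply HL; auto. }
 destruct (unif_delta I (fun i d => d <= tau i / 2 - sumR I L)) as [c [Hc0 Hc]].
 { intros j Hj. exists (tau j/2 - sumR I L). split. specialize (Htau j Hj); lra. lra. }
 { intros; lra. }
 assert (Hxi: forall nu, inXi I ns X nc h (xs nu)). { intros [|nu]. rewrite Hxs0; auto. apply Hxs. }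
 assert (Hdesc: forall nu, theta I f g (xs (S nu)) + c * inner I ns (vsub (xs (S nu)) (xs nu)) (vsub (xs (S nu)) (xs nu)) <= theta I f g (xs nu)).
 { intros nu. apply (step1 I ns X f g gf gg tau L c); auto. apply Hxi. apply Hxi.
   apply (proj2 (Hxs nu)). apply Hxi. }
 assert (Hmono: forall nu m, (nu <= m)%nat -> theta I f g (xs m) <= theta I f g (xs nu)).
 { intros nu m Hm. induction Hm. lra. pose proof (Hdesc m). pose proof (inner_nonneg I ns (vsub (xs (S m)) (xs m))). nra. }
 assert (HK: forall nu, inXi I ns X nc h (xs nu) /\ theta I f g (xs nu) <= theta I f g x0).
 { intros nu. split. auto. rewrite <- Hxs0. apply Hmono. lia. }
 set (C := sumR I (fun i => L i + tau i / 2)).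
 assert (HC: 0 <= C). { apply sumR_nonneg. intros i Hi. specialize (HL0 i Hi); specialize (Htau_pos i Hi); lra. }
 assert (HS2: forall nu z, inXi I ns X nc h z -> 0 <= inner I ns (grad_theta I gf gg (xs nu)) (vsub z (xs (S nu))) + C * inner I ns (vsub z (xs nu)) (vsub z (xs nu))).
 { intros nu z Hz. apply (step2 I ns X f g gf gg tau L); auto. apply Hxi. apply Hxi. apply Hz. apply (proj2 (Hxs nu)); auto. }
 assert (Hconv: forall a b t, inXi I ns X nc h a -> inXi I ns X nc h b -> 0 <= t <= 1 -> inXi I ns X nc h (vadd (vscal t a) (vscal (1-t) b))).
 { intros a b t [[Wa Ba] Ha] [[Wb Bb] Hb] Ht. split. split.
   - intros i k Hik. unfold vadd, vscal. rewrite Wa, Wb by auto. ring.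
   - intros i Hi. destruct (HA2 i Hi) as [_ [_ [_ Hcvx]]]. exact (Hcvx _ _ t (Ba i Hi) (Bb i Hi) Ht).
   - intros j Hj. destruct (Hh j Hj) as [Hcv _]. eapply Rle_trans. apply Hcv; auto. apply HXU; split; auto. apply HXU; split; auto.
     specialize (Ha j Hj); specialize (Hb j Hj). nra. }
 destruct HA4 as [HKw HKc].
 right. split.
 - destruct (HKc xs HK) as [xb [phi [Kxb [Hphi Hcv]]]].
   exists xb. split. apply HKw; auto. intros eps Heps N. destruct (Hcv eps Heps) as [N0 HN0].
   exists (phi (max N N0)). pose proof (phi_ge phi Hphi (max N N0)). split. lia. apply HN0; lia.
 - intros xb [Wxb Hlp].
   assert (Hch: forall k:nat, exists m, (k <= m)%nat /\ vnorm I ns (vsub (xs m) xb) < / (INR k + 1)).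
   { intros k. assert (0 < / (INR k + 1)) by (apply Rinv_0_lt_compat; pose proof (pos_INR k); lra).
     destruct (Hlp _ H k) as [m Hm]. exists m; auto. }
   set (F := fun k => proj1_sig (constructive_indefinite_description _ (Hch k))).
   assert (HF: forall k, vnorm I ns (vsub (xs (F k)) xb) < /(INR k + 1)).
   { intros k. unfold F. destruct (constructive_indefinite_description _ _) as [m Hm]. simpl. apply Hm. }
   destruct (HKc (fun k => xs (F k)) (fun k => HK (F k))) as [x' [phi [Kx' [Hphi Hcv]]]].
   assert (E: xb = x').
   { assert (Z: inner I ns (vsub xb x') (vsub xb x') = 0).
     { apply Rle_antisym; [|apply inner_nonneg].
       cut (vnorm I ns (vsub xb x') <= 0).
       { intros. rewrite <- vnorm_sq. pose proof (vnorm_nonneg I ns (vsub xb x')). nra. }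
       apply (le_eps_le _ 0 1). lra. intros eps Heps.
       destruct (Hcv (eps/2)) as [N0 HN0]. lra.
       destruct (archimed_cor1 (eps/2)) as [N1 [HN1 HN1']]. lra.
       set (m := max N0 N1). pose proof (phi_ge phi Hphi m).
       pose proof (triangle I ns xb (xs (F (phi m))) x').
       specialize (HN0 m (Nat.le_max_l _ _)). specialize (HF (phi m)).
       rewrite vnorm_sym in HF.
       assert (/ (INR (phi m) + 1) < / INR N1).
       { apply Rinv_lt_contravar. apply Rmult_lt_0_compat. apply lt_0_INR; lia. pose proof (pos_INR (phi m)); lra.
         assert (INR N1 <= INR (phi m)) by (apply le_INR; lia). lra. }
       lra. }
     extensionality i; extensionality k.
     destruct (Compare_dec.lt_dec i I) as [Hi|Hi]; [destruct (Compare_dec.lt_dec k (ns i)) as [Hk|Hk]|].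
     - pose proof (inner_zero_coord _ _ _ Z i k Hi Hk). unfold vsub in H. lra.
     - rewrite Wxb, (HKw x' Kx'); auto; intros [_ ?]; lia.
     - rewrite Wxb, (HKw x' Kx'); auto; intros [? _]; lia. }
   subst x'. destruct Kx' as [Xxb _].
   assert (Uxb: U xb) by (apply HXU, Xxb).
   destruct (unif_delta I (fun i d => forall y, wf I ns y -> vnorm I ns (vsub y xb) < d ->
        Rabs (f i y - f i xb) <= (vnorm I ns (gf i xb) + 1) * vnorm I ns (vsub y xb) /\
        Rabs (g i y - g i xb) <= (vnorm I ns (gg i xb) + 1) * vnorm I ns (vsub y xb))) as [dth [Hdth Hth]].
   { intros j Hj. destruct (diff_cont I ns U (f j) (gf j) xb (proj1 (proj2 (Hf j Hj))) Uxb) as [d1 [Hd1 H1]].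
     destruct (diff_cont I ns U (g j) (gg j) xb (proj1 (proj2 (Hg j Hj))) Uxb) as [d2 [Hd2 H2]].
     exists (Rmin d1 d2). split. apply Rmin_pos; auto. intros y Wy Hy. split.
     apply H1; auto. eapply Rlt_le_trans; eauto; apply Rmin_l.
     apply H2; auto. eapply Rlt_le_trans; eauto; apply Rmin_r. }
   { intros j d d' Hd P y Wy Hy. apply P; auto. lra. }
   set (Mth := sumR I (fun i => vnorm I ns (gf i xb) + 1 + (vnorm I ns (gg i xb) + 1))).
   assert (HMth: 0 <= Mth). { apply sumR_nonneg. intros. pose proof (vnorm_nonneg I ns (gf i xb)). pose proof (vnorm_nonneg I ns (gg i xb)). lra. }
   assert (Hthc: forall y, wf I ns y -> vnorm I ns (vsub y xb) < dth -> Rabs (theta I f g y - theta I f g xb) <= Mth * vnorm I ns (vsub y xb)).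
   { intros y Wy Hy. unfold theta. rewrite <- sumR_sub. eapply Rle_trans. apply sumR_abs.
     unfold Mth. rewrite Rmult_comm, <- sumR_scal. apply sumR_le. intros i Hi. destruct (Hth i Hi y Wy Hy) as [H1 H2].
     replace (f i y - g i y - (f i xb - g i xb)) with ((f i y - f i xb) + - (g i y - g i xb)) by ring.
     eapply Rle_trans. apply Rabs_triang. rewrite Rabs_Ropp.
     replace (vnorm I ns (vsub y xb) * (vnorm I ns (gf i xb) + 1 + (vnorm I ns (gg i xb) + 1))) with
       ((vnorm I ns (gf i xb) + 1) * vnorm I ns (vsub y xb) + (vnorm I ns (gg i xb) + 1) * vnorm I ns (vsub y xb)) by ring.
     lra. }
   assert (Hlow: forall nu, theta I f g xb <= theta I f g (xs nu)).
   { intros N. destruct (Rle_dec (theta I f g xb) (theta I f g (xs N))) as [r|r]; auto. exfalso.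
     set (eps := theta I f g xb - theta I f g (xs N)).
     assert (Heps: 0 < eps) by (unfold eps; lra).
     assert (Hr: 0 < Rmin dth (eps/(Mth+1))) by (apply Rmin_pos; auto; apply Rdiv_lt_0_compat; lra).
     destruct (Hlp _ Hr N) as [m [Hm Hvm]].
     assert (Hv1: vnorm I ns (vsub (xs m) xb) < dth) by (eapply Rlt_le_trans; [exact Hvm|apply Rmin_l]).
     assert (Hv2: vnorm I ns (vsub (xs m) xb) < eps/(Mth+1)) by (eapply Rlt_le_trans; [exact Hvm|apply Rmin_r]).
     specialize (Hthc (xs m) (WX _ (proj1 (Hxi m))) Hv1). apply Rabs_le_inv in Hthc.
     specialize (Hmono N m Hm).
     assert (Mth * vnorm I ns (vsub (xs m) xb) <= Mth * (eps/(Mth+1))) by (apply Rmult_le_compat_l; lra).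
     assert (Mth * (eps/(Mth+1)) < eps).
     { replace (Mth * (eps/(Mth+1))) with (eps - eps/(Mth+1)) by (field; lra).
       assert (0 < eps/(Mth+1)) by (apply Rdiv_lt_0_compat; lra). lra. }
     unfold eps in *. lra. }
   split; auto. intros z Xz.
   set (G := grad_theta I gf gg xb).
   assert (Hq: forall w, inXi I ns X nc h w -> 0 <= inner I ns G (vsub w xb) + C * inner I ns (vsub w xb) (vsub w xb)).
   { intros w Xw. set (D := vsub w xb). set (nD := vnorm I ns D). set (nG := vnorm I ns G).
     set (S2 := sumR I (fun _ => 2)).
     assert (HnD: 0 <= nD) by apply vnorm_nonneg. assert (HnG: 0 <= nG) by apply vnorm_nonneg.
     assert (HS2p: 0 <= S2) by (apply sumR_nonneg; intros; lra).
     apply (ge0_of_small _ (2*nG + S2*(nD+2) + 2*C*nD + C)).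
     { assert (0 <= S2*(nD+2)) by (apply Rmult_le_pos; lra). assert (0 <= C*nD) by (apply Rmult_le_pos; lra). lra. }
     intros eta He0 He1.
     destruct (unif_delta I (fun j d => forall y, U y -> vnorm I ns (vsub y xb) < d ->
         vnorm I ns (vsub (gf j y) (gf j xb)) < eta /\ vnorm I ns (vsub (gg j y) (gg j xb)) < eta)) as [dg [Hdg Hgc]].
     { intros j Hj. destruct (proj2 (proj2 (Hf j Hj)) xb Uxb eta He0) as [d1 [Hd1 H1]].
       destruct (proj2 (proj2 (Hg j Hj)) xb Uxb eta He0) as [d2 [Hd2 H2]].
       exists (Rmin d1 d2). split. apply Rmin_pos; auto. intros y Uy Hy. split.
       apply H1; auto. eapply Rlt_le_trans; [exact Hy|apply Rmin_l].
       apply H2; auto. eapply Rlt_le_trans; [exact Hy|apply Rmin_r]. }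
     { intros j d d' Hd P y Uy Hy. apply P; auto. lra. }
     set (rho := Rmin (Rmin eta dg) (Rmin dth (c*(eta*eta)/(Mth+1)))).
     assert (Hrho: 0 < rho).
     { apply Rmin_pos; apply Rmin_pos; auto. apply Rdiv_lt_0_compat. apply Rmult_lt_0_compat; auto. nra. lra. }
     destruct (Hlp rho Hrho 0%nat) as [nu [_ Ha]].
     set (x := xs nu) in *. set (x1 := xs (S nu)).
     set (a := vsub x xb) in *. set (na := vnorm I ns a) in *.
     assert (Hna0: 0 <= na) by apply vnorm_nonneg.
     assert (Ha1: na < eta) by (eapply Rlt_le_trans; [exact Ha|]; unfold rho; eapply Rle_trans; [apply Rmin_l|apply Rmin_l]).
     assert (Ha2: na < dg) by (eapply Rlt_le_trans; [exact Ha|]; unfold rho; eapply Rle_trans; [apply Rmin_l|apply Rmin_r]).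
     assert (Ha3: na < dth) by (eapply Rlt_le_trans; [exact Ha|]; unfold rho; eapply Rle_trans; [apply Rmin_r|apply Rmin_l]).
     assert (Ha4: na < c*(eta*eta)/(Mth+1)) by (eapply Rlt_le_trans; [exact Ha|]; unfold rho; eapply Rle_trans; [apply Rmin_r|apply Rmin_r]).
     assert (Wx: wf I ns x) by (apply WX, (Hxi nu)).
     assert (Ux: U x) by (apply HXU, (Hxi nu)).
     assert (Hdd: inner I ns (vsub x1 x) (vsub x1 x) <= eta * eta).
     { pose proof (Hdesc nu) as Hd. fold x x1 in Hd. pose proof (Hlow (S nu)) as Hl. fold x1 in Hl.
       pose proof (Hthc x Wx Ha3) as Ht. fold a na in Ht. apply Rabs_le_inv in Ht.
       assert (Mth * na <= Mth * (c*(eta*eta)/(Mth+1))) by (apply Rmult_le_compat_l; lra).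
       assert (Mth * (c*(eta*eta)/(Mth+1)) <= c*(eta*eta)).
       { replace (Mth * (c*(eta*eta)/(Mth+1))) with (c*(eta*eta) - c*(eta*eta)/(Mth+1)) by (field; lra).
         assert (0 < c*(eta*eta)/(Mth+1)) by (apply Rdiv_lt_0_compat; [apply Rmult_lt_0_compat; nra|lra]). lra. }
       assert (c * inner I ns (vsub x1 x) (vsub x1 x) <= c * (eta * eta)) by lra.
       apply Rmult_le_reg_l with c; auto. }
     assert (Hd1: vnorm I ns (vsub x1 x) <= eta) by (apply sq_le_vnorm; lra).
     set (b := vsub x1 xb). set (nb := vnorm I ns b).
     assert (Hnb: nb <= 2 * eta).
     { pose proof (triangle I ns x1 x xb). fold b nb a na in H. lra. }
     assert (Hnb0: 0 <= nb) by apply vnorm_nonneg.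
     set (r := vsub w x1). set (nr := vnorm I ns r).
     assert (Hnr: nr <= nD + 2).
     { pose proof (triangle I ns w xb x1). fold r nr D nD in H. rewrite vnorm_sym in H. fold b nb in H. lra. }
     pose proof (HS2 nu w Xw) as Hs. fold x x1 r in Hs.
     set (E := sumR I (fun j => inner I ns (vsub (gf j x) (gf j xb)) r - inner I ns (vsub (gg j x) (gg j xb)) r)).
     assert (E1: inner I ns (grad_theta I gf gg x) r = inner I ns G r + E).
     { unfold G, E. rewrite !inner_grad. rewrite <- sumR_add. apply sumR_ext. intros j Hj. rewrite !inner_sub_l. ring. }
     assert (E2: Rabs E <= S2 * eta * (nD + 2)).
     { eapply Rle_trans. apply sumR_abs. unfold S2. rewrite Rmult_assoc, Rmult_comm, <- sumR_scal. apply sumR_le. intros j Hj.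
       destruct (Hgc j Hj x Ux Ha2) as [G1 G2].
       pose proof (CS_abs I ns (vsub (gf j x) (gf j xb)) r). pose proof (CS_abs I ns (vsub (gg j x) (gg j xb)) r).
       fold nr in H, H0.
       pose proof (vnorm_nonneg I ns (vsub (gf j x) (gf j xb))). pose proof (vnorm_nonneg I ns (vsub (gg j x) (gg j xb))).
       assert (Hnr0: 0 <= nr) by apply vnorm_nonneg.
       assert (vnorm I ns (vsub (gf j x) (gf j xb)) * nr <= eta * (nD + 2)) by (apply Rmult_le_compat; lra).
       assert (vnorm I ns (vsub (gg j x) (gg j xb)) * nr <= eta * (nD + 2)) by (apply Rmult_le_compat; lra).
       unfold Rminus. eapply Rle_trans. apply Rabs_triang. rewrite Rabs_Ropp. lra. }
     assert (E3: inner I ns G r = inner I ns G D - inner I ns G b).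
     { rewrite <- inner_sub_r. apply inner_ext. intros; unfold r, D, b, vsub; ring. }
     assert (E4: inner I ns (vsub w x) (vsub w x) = inner I ns D D - 2 * inner I ns D a + inner I ns a a).
     { rewrite <- inner_sq_expand. apply inner_ext. intros; unfold D, a, vsub; ring. }
     assert (h1: - (nG * (2*eta)) <= inner I ns G b).
     { pose proof (CS_abs I ns G b). fold nG nb in H. apply Rabs_le_inv in H.
       assert (nG * nb <= nG * (2*eta)) by (apply Rmult_le_compat_l; lra). lra. }
     assert (h3: - (nD * eta) <= inner I ns D a).
     { pose proof (CS_abs I ns D a). fold nD na in H. apply Rabs_le_inv in H.
       assert (nD * na <= nD * eta) by (apply Rmult_le_compat_l; lra). lra. }
     assert (h4: inner I ns a a <= eta).
     { rewrite <- vnorm_sq. fold na. nra. }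
     apply Rabs_le_inv in E2.
     assert (h5: C * (inner I ns D D - 2 * inner I ns D a + inner I ns a a) <= C * (inner I ns D D + 2 * (nD * eta) + eta))
       by (apply Rmult_le_compat_l; lra).
     rewrite E4, E1, E3 in Hs.
     assert (Eq: eta * (2 * nG + S2 * (nD + 2) + 2 * C * nD + C) = nG * (2*eta) + S2 * eta * (nD + 2) + C * (2 * (nD * eta)) + C * eta) by ring.
     rewrite Eq.
     assert (C * (inner I ns D D + 2 * (nD * eta) + eta) = C * inner I ns D D + C * (2 * (nD * eta)) + C * eta) by ring.
     lra. }
   set (D := vsub z xb).
   apply (quad_ge0 _ (C * inner I ns D D)). apply Rmult_le_pos; auto; apply inner_nonneg.
   intros t Ht0 Ht1. specialize (Hq (vadd (vscal t z) (vscal (1-t) xb)) (Hconv _ _ _ Xz Xxb (conj (Rlt_le _ _ Ht0) Ht1))).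
   assert (Ew: vsub (vadd (vscal t z) (vscal (1 - t) xb)) xb = vscal t D).
   { extensionality i; extensionality k. unfold D, vsub, vadd, vscal. ring. }
   rewrite Ew, inner_scal_r, inner_scal_r, (inner_comm I ns (vscal t D) D), inner_scal_r in Hq. fold G. lra.
Qed.
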